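(* Let $\mathcal{L}$ be a Lindbladian on $\mathbb{C}^d$, and let $\mathcal{S}=\{\mathcal{E}_1,\dots,\mathcal{E}_k\}$ be a finite set of linearly independent quantum channels on operators on $\mathbb{C}^d$. Suppose that (1) the identity map $\mathcal{I}$ lies in the convex hull $\mathrm{conv}[\mathcal{S}]$, and (2) there is a $k\times k$ $Q$-matrix $Q=(q_{ij})$ such that $\mathcal{L}\circ\mathcal{E}_i=\sum_{j=1}^k q_{ji}\,\mathcal{E}_j$ for every $i$. Then the dynamical semigroup $\Phi_t=e^{t\mathcal{L}}$ satisfies $\Phi_t\in\mathrm{conv}[\mathcal{S}]$ for all $t\ge0$.
   Context: A Lindbladian has GKSL form and generates the CPTP semigroup $(e^{t\mathcal{L}})_{t\ge0}$. A $k\times k$ $Q$-matrix (reversed transition-rate matrix) is a real matrix $Q=(q_{ij})$ with $q_{ij}\ge0$ for all $i\neq j$, finite diagonal entries, and each column summing to zero: $\sum_{i}q_{ij}=0$ for every $j$ (so $q_{jj}=-\sum_{i\neq j}q_{ij}\le0$). *)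

(* Defs.v *)
From HB Require Import structures.
From mathcomp Require Import all_boot all_order all_algebra.
From mathcomp Require Import complex.
From mathcomp Require Import all_classical all_reals topology normedtype sequences.
Set Implicit Arguments. Unset Strict Implicit. Unset Printing Implicit Defensive.
Import Order.TTheory GRing.Theory Num.Theory.
Import numFieldNormedType.Exports.
Local Open Scope ring_scope.
Local Open Scope complex_scope.
Local Open Scope classical_set_scope.

Section QDefs.
Variable R : realType.
Local Notation C := R[i].

Definition sop (d : nat) := 'M[C]_d -> 'M[C]_d.

Definition adj (d : nat) (A : 'M[C]_d) : 'M[C]_d := (map_mx (@conjc R) A)^T.

Definition lindbladian (d : nat) (L : sop d) : Prop :=
  exists H : 'M[C]_d, adj H = H /\
  exists (m : nat) (V : 'I_m -> 'M[C]_d), forall rho : 'M[C]_d,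
    L rho = (- Complex 0 1) *: (H *m rho - rho *m H)
            + \sum_(j < m) (V j *m rho *m adj (V j)
                 - 2%:R^-1 *: (adj (V j) *m V j *m rho + rho *m (adj (V j) *m V j))).

Definition psd (I : finType) (A : I -> I -> C) : Prop :=
  forall v : I -> C, 0 <= \sum_i \sum_j conjc (v i) * A i j * v j.

Definition linear_sop (d : nat) (E : sop d) : Prop :=
  forall (a : C) (x y : 'M[C]_d), E (a *: x + y) = a *: E x + E y.

(* complete positivity: id_n (x) E is positive for every n; an element of
   M_n (x) M_d is a block matrix X with blocks X p q : 'M_d. *)
Definition completely_positive (d : nat) (E : sop d) : Prop :=
  forall (n : nat) (X : 'I_n -> 'I_n -> 'M[C]_d),
    psd (fun p q : 'I_n * 'I_d => X p.1 q.1 p.2 q.2) ->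
    psd (fun p q : 'I_n * 'I_d => E (X p.1 q.1) p.2 q.2).

Definition trace_preserving (d : nat) (E : sop d) : Prop :=
  forall x : 'M[C]_d, \tr (E x) = \tr x.

Definition quantum_channel (d : nat) (E : sop d) : Prop :=
  [/\ linear_sop E, completely_positive E & trace_preserving E].

Definition lin_indep (d k : nat) (E : 'I_k -> sop d) : Prop :=
  forall c : 'I_k -> C, (forall x, \sum_(i < k) c i *: E i x = 0) -> forall i, c i = 0.

Definition in_conv (d k : nat) (E : 'I_k -> sop d) (F : sop d) : Prop :=
  exists lam : 'I_k -> R, [/\ forall i, 0 <= lam i, \sum_(i < k) lam i = 1 &
    forall x, F x = \sum_(i < k) (lam i)%:C *: E i x].

(* Q-matrix (reversed transition-rate matrix): off-diagonal >= 0, columns sum to 0 *)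
Definition Qmatrix (k : nat) (Q : 'M[R]_k) : Prop :=
  (forall i j : 'I_k, i != j -> 0 <= Q i j) /\ (forall j : 'I_k, \sum_(i < k) Q i j = 0).

Definition exp_partial (d : nat) (L : sop d) (t : R) (x : 'M[C]_d) (N : nat) : 'M[C]_d :=
  \sum_(n < N) ((t ^+ n / (n`!)%:R)%:C) *: iter n L x.

Definition is_exp_sop (d : nat) (L : sop d) (t : R) (Phi : sop d) : Prop :=
  forall (x : 'M[C]_d) (a b : 'I_d),
    (fun N => complex.Re (exp_partial L t x N a b)) @ \oo --> complex.Re (Phi x a b) /\
    (fun N => complex.Im (exp_partial L t x N a b)) @ \oo --> complex.Im (Phi x a b).

End QDefs.

(* Main.v *)
Require Import Defs.
From HB Require Import structures.
From mathcomp Require Import all_boot all_order all_algebra.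
From mathcomp Require Import complex.
From mathcomp Require Import all_classical all_reals topology normedtype sequences.
From mathcomp Require Import exp.
From mathcomp Require Import ring lra.
Import Order.TTheory GRing.Theory Num.Theory.
Import numFieldNormedType.Exports.
Local Open Scope ring_scope.
Local Open Scope complex_scope.
Local Open Scope classical_set_scope.

Section RealPart.
Variable R : realType.

Lemma abs_series_cvg (u v : R^nat) :
  (forall n, `|u n| <= v n) -> cvgn (series v) -> cvgn (series u).
Proof.
move=> uv cv; apply: normed_cvg.
apply: (series_le_cvg _ _ uv cv) => n //; exact: le_trans (uv n).
Qed.

Lemma conv_decomp (a b s : R^nat) :
  (forall n, s n = \sum_(i < n.+1) a i * b (n - i)%N) ->
  forall N, series s N = \sum_(m < N) a m * series b (N - m)%N.
Proof.
move=> hs; elim=> [|N IH]; first by rewrite /series /= !big_geq // big_ord0.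
rewrite /series /= big_nat_recr //=.
have -> : \sum_(0 <= k < N) s k = series s N by [].
rewrite IH hs.
rewrite big_ord_recr /= subnn.
rewrite [RHS]big_ord_recr /= subSnn big_nat1.
rewrite [X in _ = X + _](eq_bigr (fun m : 'I_N => a m * series b (N - m)%N + a m * b (N - m)%N)); last first.
  move=> m _; rewrite subSn; last exact: ltnW.
  by rewrite big_nat_recr //= mulrDr.
by rewrite big_split /= -addrA.
Qed.

Lemma conv_lim_ge0 (a b s : R^nat) (beta K : R) :
  (forall n, 0 <= a n) -> cvgn (series a) ->
  series b @ \oo --> beta -> 0 < beta -> (forall r, `|series b r| <= K) ->
  (forall n, s n = \sum_(i < n.+1) a i * b (n - i)%N) ->
  cvgn (series s) -> 0 <= limn (series s).
Proof.
move=> a0 ca hb hbeta hK hs cs.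
have dec := @conv_decomp a b s hs.
have [R0 _ HR0] := cvgr_ge _ hb _ hbeta.
have low n : 0 <= series s (n + R0)%N + K * (series a (n + R0)%N - series a n).
  rewrite dec.
  rewrite -(big_mkord xpredT (fun m => a m * series b (n + R0 - m)%N)).
  rewrite (@big_cat_nat _ _ _ n 0 (n + R0)) ?leq_addr //=.
  rewrite sub_series_geq ?leq_addr //.
  rewrite -addrA; apply: addr_ge0.
    rewrite big_nat_cond; apply: sumr_ge0 => i /andP[/andP[_ hi] _].
    apply: mulr_ge0; first exact: a0.
    have hR : (R0 <= n + R0 - i)%N.
      rewrite -addnBAC. exact: leq_addl. exact: ltnW.
    exact: (HR0 _ hR).
  rewrite mulr_sumr -big_split /=; apply: sumr_ge0 => i _.
  rewrite [K * _]mulrC -mulrDr; apply: mulr_ge0; first exact: a0.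
  have := hK (n + R0 - i)%N; rewrite ler_norml => /andP[h _].
  by rewrite -lerBlDr sub0r.
have hg : (fun n => series s (n + R0)%N + K * (series a (n + R0)%N - series a n)) @ \oo --> limn (series s).
  rewrite -[X in _ --> X]addr0 -(mulr0 K) -(subrr (limn (series a))).
  have sh (u : R^nat) : cvgn u -> (fun n => u (n + R0)%N) @ \oo --> limn u.
    by move=> cu; apply: cvg_comp; [exact: cvg_addnr | exact: cu].
  apply: cvgD; first exact: sh.
  apply: cvgMl_tmp; apply: cvgB; [exact: sh | exact: ca].
by apply: (ler_cvg_to (cvg_cst 0) hg); near=> n; exact: low.
Unshelve. all: by end_near.
Qed.

End RealPart.

Section MxPart.
Variable R : realType.
Variable p : nat.
Implicit Types (Q P : 'M[R]_p.+1) (v : 'cV[R]_p.+1).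

Lemma le_sum_one (F : 'I_p.+1 -> R) j : (forall i, 0 <= F i) -> F j <= \sum_i F i.
Proof. by move=> h; rewrite (bigD1 j) //= lerDl sumr_ge0. Qed.

Lemma mxpowS Q v m : Q ^+ m.+1 *m v = Q *m (Q ^+ m *m v).
Proof. by rewrite exprS mulmxA. Qed.

Lemma pow_bound Q v m : \sum_i `|v i 0| <= 1 ->
  \sum_i `|(Q ^+ m *m v) i 0| <= (\sum_i \sum_j `|Q i j|) ^+ m.
Proof.
move=> hv; elim: m => [|m IH]; first by rewrite expr0 mul1mx.
rewrite mxpowS; set w := Q ^+ m *m v.
set M := \sum_i \sum_j `|Q i j|.
have M0 : 0 <= M by apply: sumr_ge0 => i _; apply: sumr_ge0.
apply: (@le_trans _ _ (M * \sum_i `|w i 0|)); last by rewrite exprS ler_wpM2l.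
rewrite /M mulr_suml; apply: ler_sum => i _.
rewrite mulr_suml mxE; apply: (le_trans (ler_norm_sum _ _ _)).
apply: ler_sum => j _; rewrite normrM ler_wpM2l //.
by apply: (le_sum_one (fun k => `|w k 0|)).
Qed.

Lemma pow_entry_bound Q v m j : \sum_i `|v i 0| <= 1 ->
  `|(Q ^+ m *m v) j 0| <= (\sum_i \sum_j `|Q i j|) ^+ m.
Proof.
move=> hv; apply: (le_trans _ (pow_bound Q v m hv)).
exact: (le_sum_one (fun k => `|(Q ^+ m *m v) k 0|)).
Qed.

Lemma pow_ge0 P v m j : (forall i k, 0 <= P i k) -> (forall i, 0 <= v i 0) ->
  0 <= (P ^+ m *m v) j 0.
Proof.
move=> hP hv; elim: m j => [|m IH] j; first by rewrite expr0 mul1mx.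
rewrite mxpowS mxE; apply: sumr_ge0 => i _; exact: mulr_ge0.
Qed.

Lemma pow_sum0 Q v m : (forall j, \sum_i Q i j = 0) ->
  \sum_j (Q ^+ m.+1 *m v) j 0 = 0.
Proof.
move=> hQ; rewrite mxpowS.
under eq_bigr do rewrite mxE.
rewrite exchange_big /=; apply: big1 => k _.
by rewrite -mulr_suml hQ mul0r.
Qed.

Lemma scalar_pow (a : R) m : (a%:M : 'M[R]_p.+1) ^+ m = (a ^+ m)%:M.
Proof.
elim: m => [|m IH]; first by rewrite !expr0.
by rewrite !exprS IH scalar_mxM.
Qed.

Lemma mulmxMn_entry Q v k j : ((Q *+ k) *m v) j 0 = (Q *m v) j 0 *+ k.
Proof.
elim: k => [|k IHk]; first by rewrite !mulr0n mul0mx mxE.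
by rewrite !mulrS mulmxDl mxE IHk.
Qed.

Lemma pow_binom Q v (c : R) n j :
  (Q ^+ n *m v) j 0 =
  \sum_(i < n.+1) ((- c) ^+ (n - i) * ((Q + c%:M) ^+ i *m v) j 0) *+ 'C(n, i).
Proof.
have hs : (-c)%:M + c%:M = 0 :> 'M[R]_p.+1 by rewrite -raddfD /= addNr raddf0.
have eQ : Q = (- c)%:M + (Q + c%:M) by rewrite addrCA hs addr0.
rewrite {1}eQ.
rewrite exprDn_comm; last by rewrite /GRing.comm -!mulmxE scalar_mxC.
rewrite mulmx_suml summxE; apply: eq_bigr => i _.
rewrite mulmxMn_entry; congr (_ *+ _).
by rewrite scalar_pow -mulmxE mul_scalar_mx -scalemxAl mxE.
Qed.

End MxPart.

Lemma term_decomp (R : realType) p (Q : 'M[R]_p.+1) (v : 'cV[R]_p.+1) (c t : R) j n :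
  t ^+ n / n`!%:R * (Q ^+ n *m v) j 0 =
  \sum_(i < n.+1) (t ^+ i / i`!%:R * ((Q + c%:M) ^+ i *m v) j 0)
                   * exp_coeff (- (c * t)) (n - i)%N.
Proof.
rewrite (@pow_binom R p Q v c n j) mulr_sumr; apply: eq_bigr => i _.
have hi : (i <= n)%N by rewrite -ltnS.
rewrite /exp_coeff /=.
set u := ((Q + c%:M) ^+ i *m v) j 0.
rewrite -[_ *+ 'C(n, i)]mulr_natr -(bin_fact hi) !natrM -mulNr exprMn.
rewrite -{1}(subnKC hi) exprD.
have h1 : (i`!%:R : R) != 0 by rewrite pnatr_eq0 -lt0n fact_gt0.
have h2 : ((n - i)`!%:R : R) != 0 by rewrite pnatr_eq0 -lt0n fact_gt0.
have h3 : ('C(n, i)%:R : R) != 0 by rewrite pnatr_eq0 -lt0n bin_gt0.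
field.
by rewrite h1 h2 h3.
Qed.

Section LinPart.
Variable R : realType.
Local Notation C := R[i].

Lemma lin_aux2 d (a : C) (X Y P Q : 'M[C]_d) :
  (a *: X + Y) - (a *: P + Q) = a *: (X - P) + (Y - Q).
Proof. by rewrite opprD addrACA -scalerN -scalerDr. Qed.

Lemma lin_aux1 d (a c : C) (X Y : 'M[C]_d) :
  c *: (a *: X + Y) = a *: (c *: X) + c *: Y.
Proof. by rewrite scalerDr !scalerA mulrC. Qed.

Lemma lindblad_linear d (L : sop R d) : lindbladian L ->
  forall (a : C) (x y : 'M[C]_d), L (a *: x + y) = a *: L x + L y.
Proof.
move=> [H [_ [m [V hV]]]] a x y; rewrite !hV.
have hT (A B : 'M[C]_d) rho : rho = a *: x + y ->
    A *m rho - rho *m B = a *: (A *m x - x *m B) + (A *m y - y *m B).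
  move=> ->; rewrite mulmxDr mulmxDl -scalemxAr -scalemxAl.
  by rewrite opprD addrACA -scalerN -scalerDr.
have hG (A B W : 'M[C]_d) rho : rho = a *: x + y ->
    A *m rho *m B - 2%:R^-1 *: (W *m rho + rho *m W) =
    a *: (A *m x *m B - 2%:R^-1 *: (W *m x + x *m W))
    + (A *m y *m B - 2%:R^-1 *: (W *m y + y *m W)).
  move=> ->; rewrite !mulmxDr !mulmxDl -!scalemxAr -!scalemxAl.
  rewrite addrACA -scalerDr [2%:R^-1 *: (_ + _)]scalerDr scalerA [_^-1 * a]mulrC -scalerA.
  by rewrite opprD addrACA -scalerN -scalerDr.
rewrite (hT H H _ erefl).
under eq_bigr do rewrite (hG _ _ _ _ erefl).
rewrite big_split /= -scaler_sumr.
rewrite scalerDr scalerA (mulrC (- Complex 0 1) a) -scalerA.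
by rewrite addrACA -scalerDr.
Qed.

Lemma lin_sum d (L : sop R d) : lindbladian L ->
  forall n (c : 'I_n -> C) (F : 'I_n -> 'M[C]_d),
  L (\sum_j c j *: F j) = \sum_j c j *: L (F j).
Proof.
move=> /lindblad_linear hL n c F.
have L0 : L 0 = 0.
  by have := hL (-1) 0 0; rewrite scaler0 addr0 scaleN1r addNr.
apply: (big_rec2 (fun s1 s2 => L s1 = s2)) => [|j y1 y2 _ <-]; first exact: L0.
exact: hL.
Qed.

Lemma Re_sum n (f : 'I_n -> C) : complex.Re (\sum_j f j) = \sum_j complex.Re (f j).
Proof.
apply: (big_rec2 (fun s1 s2 => complex.Re s1 = s2)) => [//|j y1 y2 _ <-].
by case: (f j) => ? ?; case: y1.
Qed.

Lemma Im_sum n (f : 'I_n -> C) : complex.Im (\sum_j f j) = \sum_j complex.Im (f j).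
Proof.
apply: (big_rec2 (fun s1 s2 => complex.Im s1 = s2)) => [//|j y1 y2 _ <-].
by case: (f j) => ? ?; case: y1.
Qed.

Lemma Re_realM (r : R) (z : C) : complex.Re (r%:C * z) = r * complex.Re z.
Proof. by case: z => a b /=; rewrite mul0r subr0. Qed.

Lemma Im_realM (r : R) (z : C) : complex.Im (r%:C * z) = r * complex.Im z.
Proof. by case: z => a b /=; rewrite mul0r addr0. Qed.

End LinPart.


Section Extra.
Variable R : realType.

Lemma exp_series_bound (x : R) : exists K, forall r, `|series (exp_coeff x) r| <= K.
Proof.
exists (limn (series (exp_coeff `|x|))) => r.
apply: le_trans (ler_norm_sum _ _ _) _.
have -> : \sum_(0 <= k < r) `|exp_coeff x k| = series (exp_coeff `|x|) r.
  by have := congr1 (fun f => f r) (normed_series_exp_coeff x).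
apply: nondecreasing_cvgn_le; last exact: is_cvg_series_exp_coeff.
by apply: nondecreasing_series => n _ _; apply: exp_coeff_ge0.
Qed.

Lemma cvg_finsum n (f : 'I_n -> nat -> R) (l : 'I_n -> R) :
  (forall j, f j @ \oo --> l j) ->
  (fun N => \sum_j f j N) @ \oo --> \sum_j l j.
Proof.
elim: n f l => [|n IH] f l h.
  rewrite big_ord0.
  have -> : (fun N => \sum_(j < 0) f j N) = (fun _ => 0) by apply: funext => N; rewrite big_ord0.
  exact: cvg_cst.
have -> : (fun N => \sum_(j < n.+1) f j N) =
   (fun N => \sum_(j < n) f (widen_ord (leqnSn n) j) N + f ord_max N).
  by apply: funext => N; rewrite big_ord_recr.
rewrite big_ord_recr /=; apply: cvgD; last exact: h.
exact: (IH (fun j => f (widen_ord (leqnSn n) j))).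
Qed.

End Extra.

Theorem lemma1 (R : realType) (d k : nat) (L : sop R d) (E : 'I_k -> sop R d)
  (Q : 'M[R]_k) :
  lindbladian L ->
  (forall i, quantum_channel (E i)) ->
  lin_indep E ->
  in_conv E id ->
  Qmatrix Q ->
  (forall (i : 'I_k) (x : 'M[R[i]]_d),
      L (E i x) = \sum_(j < k) (Q j i)%:C *: E j x) ->
  forall t : R, 0 <= t ->
    exists Phi : sop R d, is_exp_sop L t Phi /\ in_conv E Phi.
Proof.
move=> hL _ _ [lam [lam0 lam1 hid]] [hQoff hQcol] hLE t t0.
move: E Q lam lam0 lam1 hid hQoff hQcol hLE.
case: k => [|p] E Q lam lam0 lam1 hid hQoff hQcol hLE.
  by move: lam1; rewrite big_ord0 => /eqP; rewrite eq_sym oner_eq0.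
pose v : 'cV[R]_p.+1 := \col_i lam i.
have hv : \sum_i `|v i 0| <= 1.
  by rewrite (eq_bigr lam) ?lam1 // => i _; rewrite mxE ger0_norm.
have v0 i : 0 <= v i 0 by rewrite mxE.
have hw0 j : (Q ^+ 0 *m v) j 0 = lam j by rewrite expr0 mul1mx mxE.
have hiter n x : iter n L x = \sum_j ((Q ^+ n *m v) j 0)%:C *: E j x.
  elim: n => [|n IH] /=.
    apply: etrans (hid x) _; apply: eq_bigr => j _; by rewrite hw0.
  rewrite IH (@lin_sum R d L hL).
  rewrite (eq_bigr (fun j => \sum_(i < p.+1) ((Q ^+ n *m v) j 0)%:C *: ((Q i j)%:C *: E i x))); last first.
    by move=> j _ /=; rewrite hLE scaler_sumr.
  rewrite exchange_big /=; apply: eq_bigr => i _.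
  rewrite mxpowS mxE raddf_sum /= scaler_suml; apply: eq_bigr => j _.
  by rewrite scalerA rmorphM /= mulrC.
pose term (j : 'I_p.+1) (n : nat) := t ^+ n / n`!%:R * (Q ^+ n *m v) j 0.
have tbound (X : 'M[R]_p.+1) j n :
    `|t ^+ n / n`!%:R * (X ^+ n *m v) j 0| <= exp_coeff (t * \sum_i \sum_j `|X i j|) n.
  rewrite /exp_coeff /= normrM ger0_norm ?divr_ge0 ?exprn_ge0 //.
  rewrite exprMn [X in _ <= X](mulrAC (t ^+ n)) ler_wpM2l ?divr_ge0 ?exprn_ge0 //.
  exact: (@pow_entry_bound R p X v n j hv).
have cterm j : cvgn (series (term j)).
  apply: (@abs_series_cvg R (term j) (exp_coeff (t * \sum_i \sum_j `|Q i j|))).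
    by move=> n; exact: (tbound Q j n).
  exact: is_cvg_series_exp_coeff.
pose mu j := limn (series (term j)).
have hpart x N : exp_partial L t x N = \sum_j (series (term j) N)%:C *: E j x.
  rewrite /exp_partial.
  rewrite (eq_bigr (fun n : 'I_N => \sum_j ((t ^+ n / n`!%:R)%:C * ((Q ^+ n *m v) j 0)%:C) *: E j x)); last first.
    by move=> n _; rewrite hiter scaler_sumr; apply: eq_bigr => j _; rewrite scalerA.
  rewrite exchange_big /=; apply: eq_bigr => j _.
  rewrite /series /= big_mkord raddf_sum /= scaler_suml; apply: eq_bigr => n _.
  by rewrite /term -rmorphM.
have hsum N : \sum_j series (term j) N.+1 = 1.
  rewrite /series /= exchange_big /= big_nat_recl //=.
  rewrite (eq_bigr lam); last by move=> j _; rewrite /term expr0 fact0 divr1 mul1r hw0.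
  rewrite lam1 big1_seq ?addr0 // => n _.
  rewrite /term -mulr_sumr (@pow_sum0 R p Q v n hQcol) mulr0 //.
have csum : (fun N => \sum_j series (term j) N) @ \oo --> \sum_j mu j.
  by apply: cvg_finsum => j; exact: (cterm j).
have mu1 : \sum_j mu j = 1.
  have h1 : (fun N => \sum_j series (term j) (N + 1)%N) @ \oo --> \sum_j mu j.
    by apply: cvg_comp csum; exact: cvg_addnr.
  have e1 : (fun N => \sum_j series (term j) (N + 1)%N) = (fun _ => 1).
    by apply: funext => N; rewrite addn1 hsum.
  rewrite e1 in h1.
  apply: le_anti; apply/andP; split.
    apply: (ler_cvg_to h1 (@cvg_cst _ (1:R) _ _ _)).
    by near=> N.
  apply: (ler_cvg_to (@cvg_cst _ (1:R) _ _ _) h1).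
  by near=> N.
pose c := \sum_i `|Q i i|.
pose P := Q + c%:M.
have P0 i l : 0 <= P i l.
  rewrite !mxE; case: (eqVneq i l) => [->|hil] /=.
    rewrite mulr1n.
    have h1 : `|Q l l| <= c by apply: (@le_sum_one R p (fun i => `|Q i i|)).
    have h2 : - Q l l <= `|Q l l| by rewrite -normrN ler_norm.
    lra.
  by rewrite mulr0n addr0 hQoff.
have mu0 j : 0 <= mu j.
  have [K hK] := @exp_series_bound R (- (c * t)).
  apply: (@conv_lim_ge0 R (fun i => t ^+ i / i`!%:R * (P ^+ i *m v) j 0)
            (exp_coeff (- (c * t))) (term j) (expR (- (c * t))) K).
  - move=> i; apply: mulr_ge0; first by rewrite divr_ge0 ?exprn_ge0.
    exact: pow_ge0.
  - apply: (@abs_series_cvg R _ (exp_coeff (t * \sum_i \sum_j `|P i j|))).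
      by move=> n; exact: (tbound P j n).
    exact: is_cvg_series_exp_coeff.
  - exact: is_cvg_series_exp_coeff.
  - exact: expR_gt0.
  - exact: hK.
  - by move=> n; rewrite /term (@term_decomp R p Q v c t j n).
  - exact: cterm.
exists (fun x => \sum_j (mu j)%:C *: E j x); split; last by exists mu.
move=> x a b.
have eRe N : complex.Re (exp_partial L t x N a b) = \sum_j series (term j) N * complex.Re (E j x a b).
  by rewrite hpart summxE Re_sum; apply: eq_bigr => j _; rewrite mxE Re_realM.
have eIm N : complex.Im (exp_partial L t x N a b) = \sum_j series (term j) N * complex.Im (E j x a b).
  by rewrite hpart summxE Im_sum; apply: eq_bigr => j _; rewrite mxE Im_realM.
rewrite summxE Re_sum Im_sum (funext eRe) (funext eIm).
split.
  rewrite (eq_bigr (fun j => mu j * complex.Re (E j x a b))); last by move=> j _; rewrite mxE Re_realM.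
  by apply: cvg_finsum => j; apply: cvgMr_tmp; exact: (cterm j).
rewrite (eq_bigr (fun j => mu j * complex.Im (E j x a b))); last by move=> j _; rewrite mxE Im_realM.
by apply: cvg_finsum => j; apply: cvgMr_tmp; exact: (cterm j).
Unshelve. all: by end_near.
Qed.
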